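(* Let $b,\beta_{vh},\beta_{hv},m,\tau_h,\tau_v,\mu_v,\tau_1,\tau_2>0$ and consider the distributed-delay system $$\dot E(t)=b\beta_{vh}mI_v(t)\Big(1-E(t)-\int_{t-\tau_1-\tau_2}^t\tfrac1{\tau_h}E(s)\,ds\Big)-\tfrac1{\tau_h}E(t),$$ $$\dot E_v(t)=b\beta_{hv}\int_{t-\tau_1}^t\tfrac1{\tau_h}E(s)\,ds\,\big(1-E_v(t)-I_v(t)\big)-\Big(\tfrac1{\tau_v}+\mu_v\Big)E_v(t),\qquad \dot I_v(t)=\tfrac1{\tau_v}E_v(t)-\mu_vI_v(t).$$ Let $$\mathcal R_0=\frac{b^2\beta_{vh}\beta_{hv}m\tau_1}{\mu_v(\mu_v\tau_v+1)}.$$ Then there exists an endemic equilibrium $(E^*,E_v^*,I_v^* )\in(0,1)^3$ (a constant stationary solution, with $E\equiv E^*$) of this system if and only if $\mathcal R_0>1$. In that case $$E^*=\frac{\mu_v\tau_h(\mathcal R_0-1)}{\mu_v\mathcal R_0(\tau_1+\tau_2+\tau_h)+b\beta_{hv}\tau_1},\quad E_v^*=\frac{\mu_v\tau_v(\mathcal R_0-1)}{\mathcal R_0(1+\mu_v\tau_v)+b\beta_{vh}m(\tau_1+\tau_2+\tau_h)},$$ $$I_v^*=\frac{\mathcal R_0-1}{\mathcal R_0(1+\mu_v\tau_v)+b\beta_{vh}m(\tau_1+\tau_2+\tau_h)}.$$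
   Context: This is the ''uniform host response'' reduction of a structured host–vector model: $E$ is the exposed host proportion, $E_v,I_v$ are the exposed and infected vector proportions, $\tau_1$ is the host infectious period, $\tau_2$ the recovery period, $\tau_h,\tau_v$ the intrinsic and extrinsic incubation periods, $b$ the biting rate, $\beta_{vh},\beta_{hv}$ transmission probabilities, $\mu_v$ the vector death rate and $m$ the vector-to-host ratio. Data are $E(t)$ on $[-\tau_1-\tau_2,0]$ and $E_v(0),I_v(0)$. *)

(* Defs.v *)
From Stdlib Require Import Reals.
From Coquelicot Require Import Coquelicot.
Open Scope R_scope.

Definition rhs_E (b bvh m tauh tau1 tau2 : R) (E Iv : R -> R) (t : R) : R :=
  b * bvh * m * Iv t
    * (1 - E t - RInt (fun s => / tauh * E s) (t - tau1 - tau2) t)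
  - / tauh * E t.

Definition rhs_Ev (b bhv tauh tauv muv tau1 : R) (E Ev Iv : R -> R) (t : R) : R :=
  b * bhv * RInt (fun s => / tauh * E s) (t - tau1) t * (1 - Ev t - Iv t)
  - (/ tauv + muv) * Ev t.

Definition rhs_Iv (tauv muv : R) (Ev Iv : R -> R) (t : R) : R :=
  / tauv * Ev t - muv * Iv t.

Definition is_solution (b bvh bhv m tauh tauv muv tau1 tau2 : R)
    (E Ev Iv : R -> R) : Prop :=
  forall t : R,
    is_derive E t (rhs_E b bvh m tauh tau1 tau2 E Iv t) /\
    is_derive Ev t (rhs_Ev b bhv tauh tauv muv tau1 E Ev Iv t) /\
    is_derive Iv t (rhs_Iv tauv muv Ev Iv t).

Definition is_equilibrium (b bvh bhv m tauh tauv muv tau1 tau2 : R)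
    (Es Evs Ivs : R) : Prop :=
  is_solution b bvh bhv m tauh tauv muv tau1 tau2
    (fun _ => Es) (fun _ => Evs) (fun _ => Ivs).

Definition in01 (x : R) : Prop := 0 < x < 1.

Definition basicR0 (b bvh bhv m tauv muv tau1 : R) : R :=
  b ^ 2 * bvh * bhv * m * tau1 / (muv * (muv * tauv + 1)).

(* Main.v *)
Require Import Defs.
From Stdlib Require Import Reals Lra Lia Psatz.
From Coquelicot Require Import Coquelicot.
Open Scope R_scope.
Lemma rint_c (c x y : R) : RInt (fun _ => c) x y = (y - x) * c.
Proof. rewrite RInt_const. reflexivity. Qed.
Lemma equil_iff b bvh bhv m tauh tauv muv tau1 tau2 Es Evs Ivs :
  is_equilibrium b bvh bhv m tauh tauv muv tau1 tau2 Es Evs Ivs <->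
  (b*bvh*m*Ivs*(1 - Es - (tau1+tau2)*(/tauh*Es)) - /tauh*Es = 0 /\
   b*bhv*(tau1*(/tauh*Es))*(1-Evs-Ivs) - (/tauv+muv)*Evs = 0 /\
   /tauv*Evs - muv*Ivs = 0).
Proof.
  unfold is_equilibrium, is_solution, rhs_E, rhs_Ev, rhs_Iv.
  split.
  - intros H. destruct (H 0) as [H1 [H2 H3]]. rewrite !rint_c in H1, H2.
    apply is_derive_unique in H1. apply is_derive_unique in H2.
    apply is_derive_unique in H3. rewrite Derive_const in H1, H2, H3.
    replace (0 - (0 - tau1 - tau2)) with (tau1+tau2) in H1 by ring.
    replace (0 - (0 - tau1)) with tau1 in H2 by ring.
    repeat split; lra.
  - intros [H1 [H2 H3]] t. rewrite !rint_c.
    replace (t - (t - tau1 - tau2)) with (tau1+tau2) by ring.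
    replace (t - (t - tau1)) with tau1 by ring.
    rewrite H1, H2, H3. split; [|split]; [exact (is_derive_const Es t)|exact (is_derive_const Evs t)|exact (is_derive_const Ivs t)].
Qed.
Theorem proposition4 (b bvh bhv m tauh tauv muv tau1 tau2 : R)
  (hb : 0 < b) (hbvh : 0 < bvh) (hbhv : 0 < bhv) (hm : 0 < m)
  (htauh : 0 < tauh) (htauv : 0 < tauv) (hmuv : 0 < muv)
  (htau1 : 0 < tau1) (htau2 : 0 < tau2) :
  let r0 := basicR0 b bvh bhv m tauv muv tau1 in
  ((exists Es Evs Ivs : R,
      in01 Es /\ in01 Evs /\ in01 Ivs /\
      is_equilibrium b bvh bhv m tauh tauv muv tau1 tau2 Es Evs Ivs)
   <-> r0 > 1) /\
  (forall Es Evs Ivs : R,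
      in01 Es -> in01 Evs -> in01 Ivs ->
      is_equilibrium b bvh bhv m tauh tauv muv tau1 tau2 Es Evs Ivs ->
      Es = muv * tauh * (r0 - 1)
             / (muv * r0 * (tau1 + tau2 + tauh) + b * bhv * tau1) /\
      Evs = muv * tauv * (r0 - 1)
             / (r0 * (1 + muv * tauv) + b * bvh * m * (tau1 + tau2 + tauh)) /\
      Ivs = (r0 - 1)
             / (r0 * (1 + muv * tauv) + b * bvh * m * (tau1 + tau2 + tauh))).
Proof.
  intros r0.
  assert (ha : 0 < b*bvh*m) by (apply Rmult_lt_0_compat; [apply Rmult_lt_0_compat|]; lra).
  assert (hk : 0 < 1 + muv*tauv) by nra.
  assert (hT : 0 < tau1+tau2+tauh) by lra.
  assert (Hr0 : b*bhv*tau1*(b*bvh*m) = r0*(muv*(1+muv*tauv))).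
  { unfold r0, basicR0. field. lra. }
  assert (hr0 : 0 < r0).
  { unfold r0, basicR0. apply Rmult_lt_0_compat.
    - repeat apply Rmult_lt_0_compat; try lra; try (apply pow_lt; lra).
    - apply Rinv_0_lt_compat. nra. }
  set (a := b*bvh*m) in *.
  set (k := 1 + muv*tauv) in *.
  set (T := tau1+tau2+tauh) in *.
  assert (Hder : forall Es Evs Ivs, in01 Es -> in01 Evs -> in01 Ivs ->
      is_equilibrium b bvh bhv m tauh tauv muv tau1 tau2 Es Evs Ivs ->
      Evs = muv*tauv*Ivs /\ Es*(1+a*Ivs*T) = a*Ivs*tauh /\
      r0*(1-k*Ivs) = 1 + a*Ivs*T).
  { intros Es Evs Ivs [hE1 hE2] [hV1 hV2] [hI1 hI2] Heq.
    apply equil_iff in Heq. destruct Heq as [H1 [H2 H3]].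
    assert (HV : Evs = muv*tauv*Ivs).
    { replace Evs with (tauv*(/tauv*Evs - muv*Ivs) + muv*tauv*Ivs) by (field; lra).
      rewrite H3. ring. }
    assert (HE : Es*(1+a*Ivs*T) = a*Ivs*tauh).
    { assert (E : a*Ivs*tauh - Es*(1+a*Ivs*T) =
         tauh*(b*bvh*m*Ivs*(1 - Es - (tau1+tau2)*(/tauh*Es)) - /tauh*Es))
        by (unfold a, T; field; lra).
      rewrite H1 in E. lra. }
    assert (H2' : b*bhv*tau1*Es*(1-k*Ivs) = muv*k*Ivs*tauh).
    { assert (E : b*bhv*tau1*Es*(1-k*Ivs) - muv*k*Ivs*tauh =
        tauh*(b*bhv*(tau1*(/tauh*Es))*(1-Evs-Ivs) - (/tauv+muv)*Evs))
        by (rewrite HV; unfold k; field; lra).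
      rewrite H2 in E. lra. }
    assert (Hkey : b*bhv*tau1*a*(1-k*Ivs) = muv*k*(1+a*Ivs*T)).
    { apply (Rmult_eq_reg_l (Ivs*tauh)); [|nra].
      transitivity (b*bhv*tau1*(Es*(1+a*Ivs*T))*(1-k*Ivs)).
      - rewrite HE. ring.
      - transitivity ((b*bhv*tau1*Es*(1-k*Ivs))*(1+a*Ivs*T)); [ring|].
        rewrite H2'. ring. }
    rewrite Hr0 in Hkey.
    repeat split; try assumption.
    apply (Rmult_eq_reg_l (muv*k)); [|nra]. rewrite <- Hkey. ring. }
  split.
  - split.
    + intros [Es [Evs [Ivs [h1 [h2 [h3 Heq]]]]]].
      destruct (Hder _ _ _ h1 h2 h3 Heq) as [_ [_ Hk]].
      destruct h3 as [hI1 hI2].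
      assert (0 < r0*k*Ivs) by (apply Rmult_lt_0_compat; [apply Rmult_lt_0_compat|]; lra).
      assert (0 < a*Ivs*T) by (apply Rmult_lt_0_compat; [apply Rmult_lt_0_compat|]; lra).
      nra.
    + intros hgt.
      assert (hD : 0 < r0*k + a*T) by nra.
      set (I0 := (r0-1)/(r0*k+a*T)).
      assert (hI0 : 0 < I0) by (unfold I0; apply Rdiv_lt_0_compat; lra).
      assert (hI0' : I0*(r0*k+a*T) = r0-1) by (unfold I0; field; lra).
      assert (haIT : 0 < a*I0*T) by (apply Rmult_lt_0_compat; [apply Rmult_lt_0_compat|]; lra).
      assert (hD2 : 0 < 1 + a*I0*T) by lra.
      exists (a*I0*tauh/(1+a*I0*T)), (muv*tauv*I0), I0.
      split; [|split; [|split]].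
      * split. apply Rdiv_lt_0_compat; [nra|lra].
        apply Rlt_div_l; [lra|]. unfold T in *. nra.
      * assert (hkI : k*I0 < 1).
        { assert (0 < a*T*I0) by (apply Rmult_lt_0_compat; [apply Rmult_lt_0_compat|]; lra).
          assert (r0*(k*I0) < r0*1) by lra.
          apply (Rmult_lt_reg_l r0); lra. }
        assert (muv*tauv*I0 < k*I0) by (unfold k; lra).
        split; [|lra]. apply Rmult_lt_0_compat; [apply Rmult_lt_0_compat|]; lra.
      * assert (hkI : k*I0 < 1).
        { assert (0 < a*T*I0) by (apply Rmult_lt_0_compat; [apply Rmult_lt_0_compat|]; lra).
          assert (r0*(k*I0) < r0*1) by lra.
          apply (Rmult_lt_reg_l r0); lra. }
        assert (0 < muv*tauv*I0) by (apply Rmult_lt_0_compat; [apply Rmult_lt_0_compat|]; lra).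
        split; [lra|]. assert (I0 < k*I0) by (unfold k; lra). lra.
      * apply equil_iff. split; [|split].
        -- unfold a, T in *. field. lra.
        -- transitivity (I0/(1+a*I0*T) * (b*bhv*tau1*a*(1-k*I0) - muv*k*(1+a*I0*T))).
           ++ unfold a, k, T in *. field. lra.
           ++ rewrite Hr0. replace (r0 * (muv * k) * (1 - k * I0) - muv * k * (1 + a * I0 * T))
                with (muv*k*(r0 - 1 - I0*(r0*k+a*T))) by ring.
              rewrite hI0'. ring.
        -- field. lra.
  - intros Es Evs Ivs h1 h2 h3 Heq.
    destruct (Hder _ _ _ h1 h2 h3 Heq) as [HV [HE Hk]].
    destruct h3 as [hI1 hI2]. destruct h1 as [hE1 hE2].
    assert (hD : 0 < r0*k + a*T) by nra.
    assert (HI : Ivs*(r0*k+a*T) = r0-1).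
    { replace (Ivs*(r0*k+a*T)) with (r0 - r0*(1-k*Ivs) + a*Ivs*T) by ring.
      rewrite Hk. ring. }
    assert (HI' : Ivs = (r0-1)/(r0*k+a*T)) by (rewrite <- HI; field; apply Rgt_not_eq; exact hD).
    assert (hD3 : 0 < muv*r0*T + b*bhv*tau1) by
      (assert (0 < b*bhv*tau1) by (apply Rmult_lt_0_compat; [apply Rmult_lt_0_compat|]; lra);
       assert (0 < muv*r0*T) by (apply Rmult_lt_0_compat; [apply Rmult_lt_0_compat|]; lra); lra).
    split; [|split].
    + apply (Rmult_eq_reg_l (a*(muv*r0*T + b*bhv*tau1))); [|nra].
      replace (a * (muv * r0 * T + b * bhv * tau1) *
        (muv * tauh * (r0 - 1) / (muv * r0 * T + b * bhv * tau1)))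
        with (a*muv*tauh*(r0-1)) by (field; lra).
      replace (a * (muv * r0 * T + b * bhv * tau1) * Es)
        with (muv*r0*Es*a*T + Es*(b*bhv*tau1*a)) by ring.
      rewrite Hr0.
      replace (muv * r0 * Es * a * T + Es * (r0 * (muv * k)))
        with (muv*(Es*(r0*(k+a*T)))) by ring.
      replace (r0*(k+a*T)) with ((1+a*Ivs*T)*(r0*k+a*T))
        by (replace ((1+a*Ivs*T)*(r0*k+a*T)) with (r0*k+a*T + a*T*(Ivs*(r0*k+a*T))) by ring;
            rewrite HI; ring).
      replace (muv * (Es * ((1 + a * Ivs * T) * (r0 * k + a * T))))
        with (muv*(Es*(1+a*Ivs*T))*(r0*k+a*T)) by ring.
      rewrite HE. rewrite <- HI. ring.
    + rewrite HV, HI'. field. lra.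
    + exact HI'.
Qed.
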